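(* Let $\mathsf{CS}$ be a constant specification for $\mathsf{LPC}^+$. The canonical relational model $\mathcal M=(W,W_N,R_{Fm},R_{Tm},V)$ for $\mathsf{LPC}^+_{\mathsf{CS}}$ is an $\mathsf{LPC}^+_{\mathsf{CS}}$-model.
   Context: Language: countable sets $\mathsf{Const}$, $\mathsf{Var}$, $\mathsf{Prop}$; terms $t ::= c \mid x \mid t\cdot t \mid t+t \mid\ !t$; formulas $\phi ::= p \mid \neg\phi \mid \phi\wedge\phi \mid \phi\supset\phi \mid \phi>\phi \mid t{:}\phi$; $\mathsf{Tm},\mathsf{Fm}$ the sets of terms and formulas; $\bot:=\chi\wedge\neg\chi$ for a fixed $\chi$. Axiom schemes of $\mathsf{LPC}^+$: (A1) all instances of classical tautologies; (A2) $(\phi>(\psi\supset\chi))\supset((\phi>\psi)\supset(\phi>\chi))$; (A3) $\phi>\phi$; (A4) $(\phi>\psi)\supset(\phi\supset\psi)$; (A5) $(s{:}(\phi>\psi)\wedge t{:}\phi) > (s\cdot t){:}\psi$; (A6) $s{:}\phi > (s+t){:}\phi$; (A7) $t{:}\phi>(s+t){:}\phi$; (A8) $t{:}\phi>\phi$; (A9) $t{:}\phi > (!t){:}t{:}\phi$. A constant specification $\mathsf{CS}$ is a set of $c{:}\phi$ with $c\in\mathsf{Const}$, $\phi$ an instance of (A1)–(A9). $\mathsf{LPC}^+_{\mathsf{CS}}$: axioms (A1)–(A9) and $\mathsf{CS}$; rules (MP) and (RCN): from $\psi$ infer $\phi>\psi$. $T\vdash\phi$ iff $\vdash(\psi_1\wedge\cdots\wedge\psi_n)\supset\phi$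 for some $\psi_i\in T$; $T$ consistent iff $T\nvdash\bot$; maximal consistent sets as usual. Relational models $(W,W_N,R_{Fm},R_{Tm},V)$: $W_N\subseteq W$ nonempty; $R_\phi\subseteq W_N\times W_N$ for each formula; $R_t\subseteq W\times W$ for each term; $V(w)\subseteq\mathsf{Prop}$ for $w\in W_N$, $V(w)\subseteq\mathsf{Fm}$ for $w\in W\setminus W_N$. Truth: at non-normal $w$, $w\models\phi$ iff $\phi\in V(w)$; at normal $w$: $p$ iff $p\in V(w)$, $\neg,\wedge,\supset$ classical, $\phi>\psi$ iff $R_\phi(w)\subseteq[\psi]$, $t{:}\phi$ iff $R_t(w)\subseteq[\phi]$, with $[\phi]=\{w\in W: w\models\phi\}$. An $\mathsf{LPC}^+_{\mathsf{CS}}$-model is a relational model such that for all $w\in W_N$: (1) $R_\phi(w)\subseteq[\phi]$ for all $\phi$; (2) if $w\in[\phi]$ then $w\in R_\phi(w)$; (3) $R_c(w)\subseteq[\phi]$ for each $c{:}\phi\in\mathsf{CS}$; (4) $R_{s+t}(w)\subseteq R_s(w)\cap R_t(w)$; (5) for all $v\in R_{s\cdot t}(w)$ and all $\phi,\psi$: if $w\in[s{:}(\phi>\psi)\wedge t{:}\phi]$ then $v\in[\psi]$; (6) $wR_tw$ for all $t$; (7) for all $t$ and $v,u\in W$, if $wR_{!t}v$ and $vR_tu$ then $wR_tu$. The canonical relational model for $\mathsf{LPC}^+_{\mathsf{CS}}$: $W$ is the set of all subsets of $\mathsf{Fm}$; $W_N$ is the set of maximal $\mathsf{LPC}^+_{\mathsf{CS}}$-consistent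 sets; for $\Gamma,\Delta\in W_N$, $\Gamma R_\phi\Delta$ iff $\Gamma/\phi\subseteq\Delta$ where $\Gamma/\phi=\{\psi:\phi>\psi\in\Gamma\}$; for $\Gamma,\Delta\in W$, $\Gamma R_t\Delta$ iff $\Gamma/t\subseteq\Delta$ where $\Gamma/t=\{\psi: t{:}\psi\in\Gamma\}$; $V(\Gamma)=\Gamma$ for $\Gamma\in W\setminus W_N$ and $V(\Gamma)=\mathsf{Prop}\cap\Gamma$ for $\Gamma\in W_N$. *)

(* Defs.v *)
From Stdlib Require Import List.
Import ListNotations.

(* Const, Var, Prop : countable sets, each represented by nat. *)
Inductive Tm : Type :=
  | TConst : nat -> Tm
  | TVar : nat -> Tm
  | TApp : Tm -> Tm -> Tm
  | TSum : Tm -> Tm -> Tm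
  | TBang : Tm -> Tm.

Inductive Fm : Type :=
  | Atom : nat -> Fm
  | Neg : Fm -> Fm
  | And : Fm -> Fm -> Fm
  | Imp : Fm -> Fm -> Fm
  | Cond : Fm -> Fm -> Fm
  | Just : Tm -> Fm -> Fm.

Definition chi : Fm := Atom 0.
Definition Bot : Fm := And chi (Neg chi).

Inductive PF : Type :=
  | PVar : nat -> PF
  | PNeg : PF -> PF
  | PAnd : PF -> PF -> PF
  | PImp : PF -> PF -> PF.

Fixpoint peval (v : nat -> bool) (f : PF) : bool :=
  match f with
  | PVar n => v n
  | PNeg a => negb (peval v a)
  | PAnd a b => andb (peval v a) (peval v b)
  | PImp a b => orb (negb (peval v a)) (peval v b)
  end.

Definition tautology (f : PF) : Prop := forall v, peval v f = true.

Fixpoint psubst (s : nat -> Fm) (f : PF) : Fm :=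
  match f with
  | PVar n => s n
  | PNeg a => Neg (psubst s a)
  | PAnd a b => And (psubst s a) (psubst s b)
  | PImp a b => Imp (psubst s a) (psubst s b)
  end.

Inductive IsAx : Fm -> Prop :=
  | A1 : forall f s, tautology f -> IsAx (psubst s f)
  | A2 : forall p q r,
      IsAx (Imp (Cond p (Imp q r)) (Imp (Cond p q) (Cond p r)))
  | A3 : forall p, IsAx (Cond p p)
  | A4 : forall p q, IsAx (Imp (Cond p q) (Imp p q))
  | A5 : forall s t p q,
      IsAx (Cond (And (Just s (Cond p q)) (Just t p)) (Just (TApp s t) q))
  | A6 : forall s t p, IsAx (Cond (Just s p) (Just (TSum s t) p))
  | A7 : forall s t p, IsAx (Cond (Just t p) (Just (TSum s t) p))
  | A8 : forall t p, IsAx (Cond (Just t p) p)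
  | A9 : forall t p, IsAx (Cond (Just t p) (Just (TBang t) (Just t p))).

Definition IsCS (CS : Fm -> Prop) : Prop :=
  forall f, CS f -> exists c p, f = Just (TConst c) p /\ IsAx p.

Inductive Prv (CS : Fm -> Prop) : Fm -> Prop :=
  | PAx : forall p, IsAx p -> Prv CS p
  | PCS : forall p, CS p -> Prv CS p
  | PMP : forall p q, Prv CS (Imp p q) -> Prv CS p -> Prv CS q
  | PRCN : forall p q, Prv CS q -> Prv CS (Cond p q).

(* conjunction of a finite list (empty conjunction = ~bot) *)
Fixpoint conjl (l : list Fm) : Fm :=
  match l with
  | [] => Neg Bot
  | [x] => x
  | x :: l' => And x (conjl l')
  end.

Definition Deriv (CS : Fm -> Prop) (T : Fm -> Prop) (p : Fm) : Prop :=
  exists l, (forall x, In x l -> T x) /\ Prv CS (Imp (conjl l) p).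

Definition Consistent CS (T : Fm -> Prop) : Prop := ~ Deriv CS T Bot.

Definition MCS CS (T : Fm -> Prop) : Prop :=
  Consistent CS T /\
  forall p, ~ T p -> ~ Consistent CS (fun x => T x \/ x = p).

Section Models.
Variables (W : Type) (WN : W -> Prop) (RF : Fm -> W -> W -> Prop)
          (RT : Tm -> W -> W -> Prop) (V : W -> Fm -> Prop).

Definition IsRelModel : Prop :=
  (exists w, WN w) /\
  (forall p w v, RF p w v -> WN w /\ WN v) /\
  (forall w f, WN w -> V w f -> exists n, f = Atom n).

Fixpoint truth (f : Fm) (w : W) : Prop :=
  (~ WN w /\ V w f) \/
  (WN w /\
   match f with
   | Atom n => V w (Atom n)
   | Neg a => ~ truth a w
   | And a b => truth a w /\ truth b w
   | Imp a b => truth a w -> truth b w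
   | Cond a b => forall v, RF a w v -> truth b v
   | Just t a => forall v, RT t w v -> truth a v
   end).

Definition IsModel (CS : Fm -> Prop) : Prop :=
  IsRelModel /\
  forall w, WN w ->
    (forall p v, RF p w v -> truth p v) /\
    (forall p, truth p w -> RF p w w) /\
    (forall c p v, CS (Just (TConst c) p) -> RT (TConst c) w v ->
                   truth p v) /\
    (forall s t v, RT (TSum s t) w v -> RT s w v /\ RT t w v) /\
    (forall s t v, RT (TApp s t) w v ->
       forall p q, truth (And (Just s (Cond p q)) (Just t p)) w ->
                   truth q v) /\
    (forall t, RT t w w) /\
    (forall t v u, RT (TBang t) w v -> RT t v u -> RT t w u).
End Models.

Definition CW := Fm -> Prop.
Definition CWN CS (G : CW) : Prop := MCS CS G.
Definition CRF CS (p : Fm) (G D : CW) : Prop :=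
  MCS CS G /\ MCS CS D /\ forall q, G (Cond p q) -> D q.
Definition CRT (t : Tm) (G D : CW) : Prop :=
  forall q, G (Just t q) -> D q.
Definition CV CS (G : CW) (f : Fm) : Prop :=
  (MCS CS G -> G f /\ exists n, f = Atom n) /\ (~ MCS CS G -> G f).

(* Main.v *)
Require Import Defs.
From Stdlib Require Import List Classical Arith Cantor Lia.
Import ListNotations.

Section S.
Variable CS : Fm -> Prop.

Lemma taut f s : tautology f -> Prv CS (psubst s f).
Proof. intro H; apply PAx, A1, H. Qed.

Ltac tt f l := refine (taut f (fun n => nth n l chi) _);
  let v := fresh "v" in intro v; simpl; destruct (v 0), (v 1), (v 2); reflexivity.

Lemma tK a b : Prv CS (Imp a (Imp b a)).
Proof. tt (PImp (PVar 0) (PImp (PVar 1) (PVar 0))) [a;b]. Qed.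
Lemma tId a : Prv CS (Imp a a).
Proof. tt (PImp (PVar 0) (PVar 0)) [a]. Qed.
Lemma tSyl a b c : Prv CS (Imp (Imp a b) (Imp (Imp b c) (Imp a c))).
Proof. tt (PImp (PImp (PVar 0) (PVar 1)) (PImp (PImp (PVar 1) (PVar 2)) (PImp (PVar 0) (PVar 2)))) [a;b;c]. Qed.
Lemma tS c a b : Prv CS (Imp (Imp c (Imp a b)) (Imp (Imp c a) (Imp c b))).
Proof. tt (PImp (PImp (PVar 0) (PImp (PVar 1) (PVar 2))) (PImp (PImp (PVar 0) (PVar 1)) (PImp (PVar 0) (PVar 2)))) [c;a;b]. Qed.
Lemma tPair c a b : Prv CS (Imp (Imp c a) (Imp (Imp c b) (Imp c (And a b)))).
Proof. tt (PImp (PImp (PVar 0) (PVar 1)) (PImp (PImp (PVar 0) (PVar 2)) (PImp (PVar 0) (PAnd (PVar 1) (PVar 2))))) [c;a;b]. Qed.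
Lemma tAndL a b : Prv CS (Imp (And a b) a).
Proof. tt (PImp (PAnd (PVar 0) (PVar 1)) (PVar 0)) [a;b]. Qed.
Lemma tAndR a b : Prv CS (Imp (And a b) b).
Proof. tt (PImp (PAnd (PVar 0) (PVar 1)) (PVar 1)) [a;b]. Qed.
Lemma tAndI a b : Prv CS (Imp a (Imp b (And a b))).
Proof. tt (PImp (PVar 0) (PImp (PVar 1) (PAnd (PVar 0) (PVar 1)))) [a;b]. Qed.
Lemma tNotBot : Prv CS (Neg Bot).
Proof. tt (PNeg (PAnd (PVar 0) (PNeg (PVar 0)))) [chi]. Qed.
Lemma tExp a b c : Prv CS (Imp (Imp (And a b) c) (Imp a (Imp b c))).
Proof. tt (PImp (PImp (PAnd (PVar 0) (PVar 1)) (PVar 2)) (PImp (PVar 0) (PImp (PVar 1) (PVar 2)))) [a;b;c]. Qed.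
Lemma tNegI a : Prv CS (Imp (Imp a Bot) (Neg a)).
Proof. tt (PImp (PImp (PVar 0) (PAnd (PVar 1) (PNeg (PVar 1)))) (PNeg (PVar 0))) [a;chi]. Qed.
Lemma tNN a : Prv CS (Imp (Imp (Neg a) Bot) a).
Proof. tt (PImp (PImp (PNeg (PVar 0)) (PAnd (PVar 1) (PNeg (PVar 1)))) (PVar 0)) [a;chi]. Qed.
Lemma tContra a : Prv CS (Imp a (Imp (Neg a) Bot)).
Proof. tt (PImp (PVar 0) (PImp (PNeg (PVar 0)) (PAnd (PVar 1) (PNeg (PVar 1))))) [a;chi]. Qed.
Lemma tNegE a b : Prv CS (Imp (Neg a) (Imp a b)).
Proof. tt (PImp (PNeg (PVar 0)) (PImp (PVar 0) (PVar 1))) [a;b]. Qed.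

Lemma mp2 a b c : Prv CS (Imp a (Imp b c)) -> Prv CS a -> Prv CS b -> Prv CS c.
Proof. intros H1 H2 H3. eapply PMP; [eapply PMP; eauto|]; auto. Qed.

Lemma syl a b c : Prv CS (Imp a b) -> Prv CS (Imp b c) -> Prv CS (Imp a c).
Proof. intros; eapply mp2; [apply tSyl| |]; eauto. Qed.

Lemma elem l x : In x l -> Prv CS (Imp (conjl l) x).
Proof.
  induction l as [|x0 l IH]; simpl; [tauto|].
  intros [<-|Hin]; destruct l as [|y l'].
  - apply tId.
  - apply tAndL.
  - destruct Hin.
  - eapply syl; [apply tAndR|]. apply IH; exact Hin.
Qed.

Lemma intro c l : (forall x, In x l -> Prv CS (Imp c x)) -> Prv CS (Imp c (conjl l)).
Proof.
  induction l as [|x0 l IH]; intro H; simpl.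
  - eapply PMP; [apply tK|apply tNotBot].
  - destruct l as [|y l'].
    + apply H; simpl; auto.
    + eapply mp2; [apply tPair| |].
      * apply H; simpl; auto.
      * apply IH; intros; apply H; simpl; auto.
Qed.

Lemma D_mem (T : Fm -> Prop) x : T x -> Deriv CS T x.
Proof. intro H; exists [x]; split; [simpl; intros y [<-|[]]; auto|apply tId]. Qed.

Lemma D_thm (T : Fm -> Prop) p : Prv CS p -> Deriv CS T p.
Proof. intro H; exists []; split; [simpl; tauto|eapply PMP; [apply tK|exact H]]. Qed.

Lemma D_mp (T : Fm -> Prop) a b : Deriv CS T (Imp a b) -> Deriv CS T a -> Deriv CS T b.
Proof.
  intros [l1 [H1 P1]] [l2 [H2 P2]]. exists (l1 ++ l2); split.
  - intros x Hx; apply in_app_or in Hx; destruct Hx; auto.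
  - assert (E1 : Prv CS (Imp (conjl (l1++l2)) (conjl l1))).
    { apply intro; intros; apply elem, in_or_app; auto. }
    assert (E2 : Prv CS (Imp (conjl (l1++l2)) (conjl l2))).
    { apply intro; intros; apply elem, in_or_app; auto. }
    eapply mp2; [apply tS | exact (syl _ _ _ E1 P1) | exact (syl _ _ _ E2 P2)].
Qed.

Lemma D_mono (T T' : Fm -> Prop) p : (forall x, T x -> T' x) -> Deriv CS T p -> Deriv CS T' p.
Proof. intros H [l [H1 H2]]; exists l; split; auto. Qed.

Lemma split_list (T : Fm -> Prop) p l : (forall x, In x l -> T x \/ x = p) ->
  exists l', (forall x, In x l' -> T x) /\ forall x, In x l -> In x l' \/ x = p.
Proof.
  induction l as [|x l IH]; intro H.
  - exists []; simpl; tauto.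
  - destruct IH as [l' [A B]]. { intros; apply H; simpl; auto. }
    destruct (H x (or_introl eq_refl)) as [Hx|Hx].
    + exists (x :: l'); split.
      * simpl; intros y [<-|Hy]; auto.
      * simpl; intros y [<-|Hy]; auto. destruct (B y Hy); auto.
    + exists l'; split; auto. simpl; intros y [<-|Hy]; auto.
Qed.

Lemma deduct (T : Fm -> Prop) p q : Deriv CS (fun x => T x \/ x = p) q -> Deriv CS T (Imp p q).
Proof.
  intros [l [H1 H2]]. destruct (split_list T p l H1) as [l' [A B]].
  exists l'; split; auto.
  eapply PMP; [apply tExp|].
  eapply syl; [|exact H2].
  apply intro; intros x Hx. destruct (B x Hx) as [Hx' | ->].
  - eapply syl; [apply tAndL|]; apply elem; auto.
  - apply tAndR.
Qed.


Section M.
Variable G : Fm -> Prop.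
Hypothesis HG : MCS CS G.

Lemma mcs_closed p : Deriv CS G p -> G p.
Proof.
  intro H. destruct (classic (G p)) as [|Hn]; auto.
  destruct HG as [Hc Hm]. exfalso. apply (Hm p Hn). intro Hcon.
  apply Hc. apply deduct in Hcon.
  exact (D_mp _ _ _ Hcon H).
Qed.

Lemma mcs_thm p : Prv CS p -> G p.
Proof. intro; apply mcs_closed, D_thm; auto. Qed.

Lemma mcs_mp a b : G (Imp a b) -> G a -> G b.
Proof. intros; apply mcs_closed; eapply D_mp; apply D_mem; eauto. Qed.

Lemma mcs_neg a : G (Neg a) <-> ~ G a.
Proof.
  split.
  - intros H1 H2. apply (proj1 HG). eapply D_mp; [eapply D_mp; [apply D_thm, tContra|]|]; apply D_mem; eauto.
  - intro Hn. destruct HG as [Hc Hm]. apply mcs_closed.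
    assert (H := Hm a Hn). apply NNPP in H. apply deduct in H.
    eapply D_mp; [apply D_thm, tNegI| exact H].
Qed.

Lemma mcs_and a b : G (And a b) <-> G a /\ G b.
Proof.
  split.
  - intro H; split; eapply mcs_mp; eauto; apply mcs_thm; [apply tAndL|apply tAndR].
  - intros [H1 H2]. eapply mcs_mp; [eapply mcs_mp; [apply mcs_thm, tAndI|]|]; eauto.
Qed.

Lemma mcs_imp a b : G (Imp a b) <-> (G a -> G b).
Proof.
  split.
  - intros; eapply mcs_mp; eauto.
  - intro H. destruct (classic (G a)) as [Ha|Ha].
    + eapply mcs_mp; [apply mcs_thm, tK|auto].
    + apply mcs_neg in Ha. eapply mcs_mp; [apply mcs_thm, tNegE|exact Ha].
Qed.

End M.
End S.

Definition pr (a b : nat) := Cantor.to_nat (a, b).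
Lemma pr_inj a b c d : pr a b = pr c d -> a = c /\ b = d.
Proof.
  unfold pr; intro H. assert (H' := f_equal Cantor.of_nat H).
  rewrite !Cantor.cancel_of_to in H'. inversion H'; auto.
Qed.

Fixpoint encT (t : Tm) : nat :=
  match t with
  | TConst n => pr 0 n
  | TVar n => pr 1 n
  | TApp s u => pr 2 (pr (encT s) (encT u))
  | TSum s u => pr 3 (pr (encT s) (encT u))
  | TBang s => pr 4 (encT s)
  end.

Fixpoint encF (f : Fm) : nat :=
  match f with
  | Atom n => pr 0 n
  | Neg a => pr 1 (encF a)
  | And a b => pr 2 (pr (encF a) (encF b))
  | Imp a b => pr 3 (pr (encF a) (encF b))
  | Cond a b => pr 4 (pr (encF a) (encF b))
  | Just t a => pr 5 (pr (encT t) (encF a))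
  end.

Lemma encT_inj t u : encT t = encT u -> t = u.
Proof.
  revert u; induction t; destruct u; simpl; intro H;
  apply pr_inj in H; destruct H as [H1 H2]; try discriminate;
  repeat match goal with
  | H : pr _ _ = pr _ _ |- _ => apply pr_inj in H; destruct H
  end; f_equal; auto.
Qed.

Lemma encF_inj t u : encF t = encF u -> t = u.
Proof.
  revert u; induction t; destruct u; simpl; intro H;
  apply pr_inj in H; destruct H as [H1 H2]; try discriminate;
  repeat match goal with
  | H : pr _ _ = pr _ _ |- _ => apply pr_inj in H; destruct H
  end; f_equal; auto using encT_inj.
Qed.

Section L.
Variable CS : Fm -> Prop.
Variable T : Fm -> Prop.

Fixpoint chain (n : nat) : Fm -> Prop :=
  match n with
  | 0 => T
  | S n => fun x => chain n x \/ (encF x = n /\ Consistent CS (fun y => chain n y \/ y = x))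
  end.

Lemma chain_mono m n x : m <= n -> chain m x -> chain n x.
Proof. induction 1; simpl; auto. Qed.

Lemma chain_cons n : Consistent CS T -> Consistent CS (chain n).
Proof.
  intro H0; induction n; simpl; auto.
  destruct (classic (exists x, encF x = n /\ Consistent CS (fun y => chain n y \/ y = x))) as [[x [Ex Cx]]|Hno].
  - intro D. apply Cx. eapply D_mono; [|exact D].
    intros y [Hy|[Ey Cy]]; auto. right. apply encF_inj; congruence.
  - intro D. apply IHn. eapply D_mono; [|exact D].
    intros y [Hy|Hy]; auto. exfalso; apply Hno; eauto.
Qed.

Definition lim (x : Fm) := exists n, chain n x.

Lemma bound l : (forall x, In x l -> lim x) -> exists N, forall x, In x l -> chain N x.
Proof.
  induction l as [|a l IH]; intro H.
  - exists 0; simpl; tauto.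
  - destruct IH as [N HN]. { intros; apply H; simpl; auto. }
    destruct (H a (or_introl eq_refl)) as [m Hm].
    exists (N + m). simpl; intros y [<-|Hy].
    + eapply chain_mono; [|exact Hm]; lia.
    + eapply chain_mono; [|apply HN; exact Hy]; lia.
Qed.

Lemma lindenbaum : Consistent CS T -> exists D, MCS CS D /\ forall x, T x -> D x.
Proof.
  intro H0. exists lim. split; [split|].
  - intros [l [H1 H2]]. destruct (bound l H1) as [N HN].
    apply (chain_cons N H0). exists l; auto.
  - intros p Hp Hc. apply Hp. exists (S (encF p)). simpl. right. split; auto.
    intro D. apply Hc. eapply D_mono; [|exact D].
    intros y [Hy|Hy]; auto. left; exists (encF p); auto.
  - intros x Hx; exists 0; auto.
Qed.
End L.

Fixpoint ev (v : nat -> bool) (f : Fm) : bool :=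
  match f with
  | Atom n => v n
  | Neg a => negb (ev v a)
  | And a b => andb (ev v a) (ev v b)
  | Imp a b => orb (negb (ev v a)) (ev v b)
  | Cond a b => orb (negb (ev v a)) (ev v b)
  | Just _ a => ev v a
  end.

Lemma ev_psubst v s f : ev v (psubst s f) = peval (fun n => ev v (s n)) f.
Proof. induction f; simpl; congruence. Qed.

Lemma ax_sound v p : IsAx p -> ev v p = true.
Proof.
  destruct 1; simpl; try rewrite ev_psubst; auto;
  repeat match goal with |- context [ev v ?x] => destruct (ev v x) end; reflexivity.
Qed.

Lemma sound CS v p : IsCS CS -> Prv CS p -> ev v p = true.
Proof.
  intros HCS; induction 1.
  - apply ax_sound; auto.
  - destruct (HCS p H) as [c [q [-> Hq]]]. simpl. apply ax_sound; auto.
  - simpl in IHPrv1. rewrite IHPrv2 in IHPrv1. exact IHPrv1.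
  - simpl. rewrite IHPrv. destruct (ev v p); reflexivity.
Qed.

Lemma empty_cons CS : IsCS CS -> Consistent CS (fun _ => False).
Proof.
  intros HCS [l [H1 H2]]. destruct l as [|x l].
  - apply (sound CS (fun _ => true)) in H2; auto. discriminate.
  - exfalso; apply (H1 x); simpl; auto.
Qed.

Section T.
Variable CS : Fm -> Prop.
Hypothesis HCS : IsCS CS.

Lemma cond_conj G a l : MCS CS G -> (forall x, In x l -> G (Cond a x)) -> G (Cond a (conjl l)).
Proof.
  intro HG; induction l as [|x l IH]; intro H; simpl.
  - apply (mcs_thm CS G HG), PRCN, tNotBot.
  - destruct l as [|y l'].
    + apply H; simpl; auto.
    + assert (Hx : G (Cond a x)) by (apply H; simpl; auto).
      assert (Hy : G (Cond a (conjl (y :: l')))) by (apply IH; intros; apply H; simpl; auto).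
      set (c := conjl (y :: l')) in *.
      assert (H1 : G (Cond a (Imp x (Imp c (And x c))))) by (apply (mcs_thm CS G HG), PRCN, tAndI).
      assert (H2 : G (Cond a (Imp c (And x c)))).
      { eapply (mcs_mp CS G HG); [eapply (mcs_mp CS G HG); [apply (mcs_thm CS G HG), PAx, A2|exact H1]|exact Hx]. }
      eapply (mcs_mp CS G HG); [eapply (mcs_mp CS G HG); [apply (mcs_thm CS G HG), PAx, A2|exact H2]|exact Hy].
Qed.

Lemma cond_deriv G a q : MCS CS G -> Deriv CS (fun x => G (Cond a x)) q -> G (Cond a q).
Proof.
  intros HG [l [H1 H2]].
  eapply (mcs_mp CS G HG); [eapply (mcs_mp CS G HG); [apply (mcs_thm CS G HG), PAx, A2|]|].
  - apply (mcs_thm CS G HG), PRCN, H2.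
  - apply cond_conj; auto.
Qed.

Lemma truth_lemma f : forall G, truth CW (CWN CS) (CRF CS) CRT (CV CS) f G <-> G f.
Proof.
  induction f; intro G; destruct (classic (MCS CS G)) as [HM|HM]; simpl;
  try (unfold CV, CWN; split; [intros [[_ [_ H]]|[H _]]; [apply H; auto|contradiction] | intro; left; repeat split; intros; solve [auto | contradiction]]).
  all: split; [intros [[Hn _]|[_ H]]; [destruct (Hn HM)|] | intro H; right; split; [exact HM|]].
  - apply (proj1 H); auto.
  - split; [intros _; split; eauto|intro; contradiction].
  - apply (mcs_neg CS G HM). rewrite <- (IHf G); auto.
  - rewrite (IHf G). apply (mcs_neg CS G HM); auto.
  - apply (mcs_and CS G HM). rewrite <- (IHf1 G), <- (IHf2 G); auto.
  - apply (mcs_and CS G HM) in H. rewrite (IHf1 G), (IHf2 G); auto.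
  - apply (mcs_imp CS G HM). rewrite <- (IHf1 G), <- (IHf2 G); auto.
  - rewrite (IHf1 G), (IHf2 G). apply (mcs_imp CS G HM); auto.
  - apply NNPP; intro Hn.
    assert (Hc : Consistent CS (fun x => G (Cond f1 x) \/ x = Neg f2)).
    { intro D. apply Hn. apply cond_deriv; auto. apply deduct in D.
      eapply D_mp; [apply D_thm, tNN|exact D]. }
    destruct (lindenbaum CS _ Hc) as [D [HD HsD]].
    assert (HDf : D f2).
    { apply IHf2, H. split; [exact HM|split; [exact HD|]]. intros q Hq; apply HsD; auto. }
    assert (HDn : D (Neg f2)) by (apply HsD; auto).
    apply (mcs_neg CS D HD) in HDn. contradiction.
  - intros v [_ [_ Hv]]. apply IHf2, Hv, H.
  - apply (IHf (fun q => G (Just t q))). apply H. intros q Hq; exact Hq.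
  - intros v Hv. apply IHf, Hv, H.
Qed.

Theorem mt : IsModel CW (CWN CS) (CRF CS) CRT (CV CS) CS.
Proof.
  destruct (lindenbaum CS _ (empty_cons CS HCS)) as [G0 [HG0 _]].
  split; [split; [|split]|].
  - exists G0; exact HG0.
  - intros p w v [H1 [H2 _]]; split; auto.
  - intros w f Hw [H _]. destruct (H Hw) as [_ E]; exact E.
  - intros G HG. unfold CWN in HG.
    assert (AX : forall a b, IsAx (Cond a b) -> G a -> G b).
    { intros a b Hab Ha. eapply (mcs_mp CS G HG); [eapply (mcs_mp CS G HG); [apply (mcs_thm CS G HG), PAx, A4|apply (mcs_thm CS G HG), PAx, Hab]|exact Ha]. }
    refine (conj _ (conj _ (conj _ (conj _ (conj _ (conj _ _)))))).
    + intros p v [_ [_ Hv]]. apply truth_lemma, Hv.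
      apply (mcs_thm CS G HG), PAx, A3.
    + intros p Hp; split; [exact HG|split; [exact HG|]]. intros q Hq. apply truth_lemma in Hp.
      eapply (mcs_mp CS G HG); [eapply (mcs_mp CS G HG); [apply (mcs_thm CS G HG), PAx, A4|exact Hq]|exact Hp].
    + intros c p v Hc Hv. apply truth_lemma, Hv. apply (mcs_thm CS G HG), PCS, Hc.
    + intros s t v H; split; intros q Hq; apply H; eapply AX; [apply A6| exact Hq| apply A7 | exact Hq].
    + intros s t v Hv p q Ht. apply truth_lemma in Ht. apply truth_lemma, Hv.
      eapply AX; [apply A5|exact Ht].
    + intros t q Hq. eapply AX; [apply A8|exact Hq].
    + intros t v u H1 H2 q Hq. apply H2, H1. eapply AX; [apply A9|exact Hq].
Qed.
End T.


Theorem mainTheorem9 (CS : Fm -> Prop) (HCS : IsCS CS) :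
  IsModel CW (CWN CS) (CRF CS) CRT (CV CS) CS.
Proof. exact (mt CS HCS). Qed.
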